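(* Let $\mathcal N_2$ be the multiset $\{\{(w_2+\omega,w_3,w_1)\in\mathbb F_q^{3m}: w_1\in\Delta_A^c,\ w_2\in\Delta_B,\ w_3\in\Delta_C,\ \omega\in\{\mathbf 0,w_1\}\}\}$ (assuming $|A|<m$) and $\mathcal N_4$ the multiset $\{\{(w_2+\omega,w_3,w_1)\in\mathbb F_q^{3m}: w_1\in\Delta_A^*,\ w_2\in\Delta_B,\ w_3\in\Delta_C^c,\ \omega\in\{\mathbf 0,w_1\}\}\}$ (assuming $|C|<m$, $|A|\ge2$), where each multiset contains one element for each admissible tuple $(w_1,w_2,w_3,\omega)$. (a) If $B\subseteq A$, then all elements of $\mathcal N_2$ are distinct, and there is a subset $\overline{\mathcal N}_2\subseteq\mathcal N_2$ with $|\overline{\mathcal N}_2|=|\mathcal N_2|/(q-1)$, whose elements span pairwise distinct one-dimensional subspaces of $\mathbb F_q^{3m}$, such that $\mathcal N_2=\{\alpha x: x\in\overline{\mathcal N}_2,\ \alpha\in\mathbb F_q^*\}$. (b) If $A\cap B=\emptyset$, then all elements of $\mathcal N_4$ are distinct, and there is a subset $\overline{\mathcal N}_4\subseteq\mathcal N_4$ with $|\overline{\mathcal N}_4|=|\mathcal N_4|/(q-1)$, whose elements span pairwise distinct one-dimensional subspaces, such that $\mathcal N_4=\{\alpha x: x\in\overline{\mathcal N}_4,\ \alpha\in\mathbb F_q^*\}$.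
   Context: $q$ is a prime power, $\mathbb F_q$ the field of order $q$, $\mathbb F_q^*=\mathbb F_q\setminus\{0\}$, $m\ge2$, $[m]=\{1,\dots,m\}$, $\mathrm{supp}(v)=\{i:v_i\ne0\}$ for $v\in\mathbb F_q^m$. For nonempty $P\subseteq[m]$, $\Delta_P=\{v\in\mathbb F_q^m:\mathrm{supp}(v)\subseteq P\}$, $\Delta_P^c=\mathbb F_q^m\setminus\Delta_P$, $\Delta_P^*=\Delta_P\setminus\{\mathbf 0\}$. $A,B,C$ are nonempty subsets of $[m]$. Elements of $\mathbb F_q^{3m}$ are written $(x,y,z)$ with $x,y,z\in\mathbb F_q^m$. *)

(* Defs.v *)
From HB Require Import structures.
From mathcomp Require Import all_boot all_order all_algebra all_field.
Set Implicit Arguments. Unset Strict Implicit. Unset Printing Implicit Defensive.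
Import GRing.Theory.
Local Open Scope ring_scope.

(* Vectors of F_q^m are row vectors 'rV[F]_m; F_q^{3m} is 'rV[F]_(m+m+m),
   and (x,y,z) is the concatenation row_mx (row_mx x y) z. *)

Definition supp (F : finFieldType) (m : nat) (v : 'rV[F]_m) : {set 'I_m} :=
  [set i | v 0 i != 0].

Definition inDelta (F : finFieldType) (m : nat) (P : {set 'I_m}) (v : 'rV[F]_m) : bool :=
  supp v \subset P.

Definition triple (F : finFieldType) (m : nat) (x y z : 'rV[F]_m) : 'rV[F]_(m + m + m) :=
  row_mx (row_mx x y) z.

(* Admissible tuples (w1,w2,w3,omega); omega is encoded by a bool b:
   b = false <-> omega = 0, b = true <-> omega = w1. *)
Definition omega (F : finFieldType) (m : nat) (w1 : 'rV[F]_m) (b : bool) : 'rV[F]_m :=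
  if b then w1 else 0.

Definition elt (F : finFieldType) (m : nat)
  (t : 'rV[F]_m * 'rV[F]_m * 'rV[F]_m * bool) : 'rV[F]_(m + m + m) :=
  let '(w1, w2, w3, b) := t in triple (w2 + omega w1 b) w3 w1.

Definition N2 (F : finFieldType) (m : nat) (A B C : {set 'I_m}) : seq 'rV[F]_(m + m + m) :=
  [seq elt t | t <- enum [pred t : 'rV[F]_m * 'rV[F]_m * 'rV[F]_m * bool |
     let '(w1, w2, w3, b) := t in
     [&& ~~ inDelta A w1, inDelta B w2 & inDelta C w3]]].

Definition N4 (F : finFieldType) (m : nat) (A B C : {set 'I_m}) : seq 'rV[F]_(m + m + m) :=
  [seq elt t | t <- enum [pred t : 'rV[F]_m * 'rV[F]_m * 'rV[F]_m * bool |
     let '(w1, w2, w3, b) := t in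
     [&& inDelta A w1, w1 != 0, inDelta B w2 & ~~ inDelta C w3]]].

Definition projective_reduction (F : finFieldType) (n : nat) (N : seq 'rV[F]_n) : Prop :=
  uniq N /\
  exists Nbar : {set 'rV[F]_n},
    [/\ {subset Nbar <= N},
        (#|Nbar| * (#|F| - 1) = size N)%N,
        (forall x, x \in Nbar -> \dim <[x]>%VS = 1%N),
        (forall x y, x \in Nbar -> y \in Nbar -> x != y -> <[x]>%VS != <[y]>%VS) &
        [set x in N] = [set a *: x | a in [set a : F | a != 0], x in Nbar]].

(* Main.v *)
Require Import Defs.
From HB Require Import structures.
From mathcomp Require Import all_boot all_order all_algebra all_field.
Set Implicit Arguments. Unset Strict Implicit.
Import GRing.Theory.
Local Open Scope ring_scope.

Section Gen.
Variables (F : finFieldType) (n : nat).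
Implicit Types (x y : 'rV[F]_n) (a b : F).

Definition lead x : F := if [pick i | x 0 i != 0] is Some i then x 0 i else 0.

Lemma lead_scale a x : a != 0 -> lead (a *: x) = a * lead x.
Proof.
move=> a0; rewrite /lead (@eq_pick _ _ (fun i => x 0 i != 0)); last first.
  by move=> i /=; rewrite mxE mulf_eq0 (negbTE a0).
by case: pickP => [i _|_]; rewrite ?mxE ?mulr0.
Qed.

Lemma lead_eq0 x : (lead x == 0) = (x == 0).
Proof.
rewrite /lead; case: pickP => [i /= xi|H].
  rewrite (negbTE xi); apply/esym/negbTE; apply: contra xi => /eqP->.
  by rewrite mxE.
rewrite eqxx; apply/esym/eqP/rowP => j; rewrite mxE.
by have := H j => /= /negbFE/eqP ->.
Qed.

Lemma gen_red (N : seq 'rV[F]_n) : uniq N -> 0 \notin N ->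
  (forall a x, a != 0 -> x \in N -> a *: x \in N) -> projective_reduction N.
Proof.
move=> uN N0 cl; split => //.
have nz x : x \in N -> x != 0 by apply: contraTneq => ->.
pose Nbar := [set x in N | lead x == 1].
have eqS : [set x in N] = [set a *: x | a in [set a : F | a != 0], x in Nbar].
  apply/setP => z; apply/idP/idP.
    rewrite inE => zN; have lz : lead z != 0 by rewrite lead_eq0 nz.
    apply/imset2P; exists (lead z) ((lead z)^-1 *: z).
    - by rewrite inE.
    - by rewrite inE cl ?invr_eq0 //= lead_scale ?invr_eq0 // mulVf.
    - by rewrite scalerKV.
  case/imset2P => a x; rewrite !inE => a0 /andP [xN _] ->; exact: cl.
exists Nbar; split.
- by move=> x; rewrite inE => /andP [].
- have inj : {in setX [set a : F | a != 0] Nbar &, injective (uncurry (fun a x => a *: x))}.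
    move=> [a x] [b y]; rewrite !inE /= => /andP [a0 /andP [_ /eqP lx]]
      /andP [b0 /andP [_ /eqP ly]] E.
    have ab : a = b.
      by have := congr1 lead E; rewrite !lead_scale // lx ly !mulr1.
    by subst b; rewrite (can_inj (scalerK a0) E).
  rewrite -(card_uniqP uN) -(cardsE (mem N)) eqS curry_imset2X (card_in_imset inj) cardsX.
  rewrite mulnC; congr (_ * _)%N.
  have -> : [set a : F | a != 0] = [set~ 0] by apply/setP => a; rewrite !inE.
  by rewrite cardsC1 subn1.
- move=> x; rewrite inE => /andP [xN _]; by rewrite dim_vline nz.
- move=> x y; rewrite !inE => /andP [_ /eqP lx] /andP [_ /eqP ly] xy.
  apply: contra xy => /eqP E.
  have : y \in <[x]>%VS by rewrite E memv_line.
  case/vlineP => b yb.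
  have b0 : b != 0.
    apply/eqP => b0; move: (ly); rewrite yb b0 scale0r => /eqP.
    have/eqP -> : lead (0 : 'rV[F]_n) == 0 by rewrite lead_eq0.
    by rewrite eq_sym oner_eq0.
  move: ly; rewrite yb lead_scale // lx mulr1 => ->.
  by rewrite scale1r.
- exact: eqS.
Qed.
End Gen.


Section M.
Variables (F : finFieldType) (m : nat).
Implicit Types (P : {set 'I_m}) (v w : 'rV[F]_m).

Lemma supp_scale (a : F) v : a != 0 -> supp (a *: v) = supp v.
Proof. by move=> a0; apply/setP => i; rewrite !inE mxE mulf_eq0 (negbTE a0). Qed.

Lemma inDelta_scale P (a : F) v : a != 0 -> inDelta P (a *: v) = inDelta P v.
Proof. by move=> a0; rewrite /inDelta supp_scale. Qed.

Lemma inDelta_sub P v w : inDelta P v -> inDelta P w -> inDelta P (v - w).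
Proof.
move=> /subsetP hv /subsetP hw; apply/subsetP => i; rewrite inE !mxE => H.
case: (boolP (i \in P)) => // iP; exfalso; move: H.
have /negbNE/eqP -> : ~~ (v 0 i != 0) by apply: contra iP => H; apply: hv; rewrite inE.
have /negbNE/eqP -> : ~~ (w 0 i != 0) by apply: contra iP => H; apply: hw; rewrite inE.
by rewrite subr0 eqxx.
Qed.

Lemma inDelta0 v : inDelta set0 v -> v = 0.
Proof.
move=> /subsetP H; apply/rowP => j; rewrite mxE.
by apply/eqP; apply/negP => /negP hj; have := H j; rewrite inE in_set0 => /(_ hj).
Qed.

Lemma elt_scale (a : F) w1 w2 w3 b :
  a *: elt (w1, w2, w3, b) = elt (a *: w1, a *: w2, a *: w3, b).
Proof. by rewrite /elt /triple /omega !scale_row_mx scalerDr; case: b; rewrite ?scaler0. Qed.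

Lemma elt_inj B w1 w2 w3 b w1' w2' w3' b' :
  inDelta B w2 -> inDelta B w2' -> ~~ inDelta B w1 ->
  elt (w1, w2, w3, b) = elt (w1', w2', w3', b') -> (w1, w2, w3, b) = (w1', w2', w3', b').
Proof.
rewrite /elt /triple => h2 h2' h1 /eq_row_mx [/eq_row_mx [E1 E3] E2].
subst w1' w3'; move: E1; rewrite /omega.
case: b; case: b' => E1.
- by rewrite (addIr _ E1).
- rewrite addr0 in E1; exfalso; move: h1.
  by rewrite (_ : w1 = w2' - w2) ?inDelta_sub // -E1 addrC addKr.
- rewrite addr0 in E1; exfalso; move: h1.
  by rewrite (_ : w1 = w2 - w2') ?inDelta_sub // E1 addrC addKr.
- by rewrite !addr0 in E1; rewrite E1.
Qed.

Lemma elt_eq0 w1 w2 w3 b : elt (w1, w2, w3, b) = 0 -> w1 = 0.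
Proof.
by rewrite /elt /triple -!row_mx0 => /eq_row_mx [_ ->].
Qed.
End M.


Local Close Scope ring_scope.
Theorem mainTheorem11 (F : finFieldType) (m : nat) (A B C : {set 'I_m}) :
  (2 <= m)%N -> A != set0 -> B != set0 -> C != set0 ->
  ((#|A| < m)%N -> B \subset A -> projective_reduction (N2 F A B C)) /\
  ((#|C| < m)%N -> (2 <= #|A|)%N -> A :&: B = set0 -> projective_reduction (N4 F A B C)).
Proof.
move=> _ _ _ _.
have supp0 : supp (0 : 'rV[F]_m) = set0 by apply/setP => i; rewrite !inE mxE eqxx.
split.
  move=> _ sBA; apply: gen_red.
  - rewrite /N2 map_inj_in_uniq ?enum_uniq //.
    move=> [[[w1 w2] w3] b] [[[w1' w2'] w3'] b']; rewrite !mem_enum /=.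
    move=> /and3P[h1 h2 h3] /and3P[h1' h2' h3'] E.
    apply: (elt_inj (B:=B)) => //.
    by apply: contra h1 => h; exact: subset_trans h sBA.
  - apply/mapP => -[[[[w1 w2] w3] b]]; rewrite mem_enum /= => /and3P[h1 _ _] /esym/elt_eq0 E.
    by move: h1; rewrite E /inDelta supp0 sub0set.
  - move=> a x a0 /mapP [[[[w1 w2] w3] b]]; rewrite mem_enum /= => /and3P[h1 h2 h3] ->.
    rewrite elt_scale; apply: map_f; rewrite mem_enum inE /= !inDelta_scale //.
    by rewrite h1 h2 h3.
move=> _ _ AB0; apply: gen_red.
- rewrite /N4 map_inj_in_uniq ?enum_uniq //.
  move=> [[[w1 w2] w3] b] [[[w1' w2'] w3'] b']; rewrite !mem_enum /=.
  move=> /and4P[h1 h0 h2 h3] /and4P[h1' h0' h2' h3'] E.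
  apply: (elt_inj (B:=B)) => //.
  apply: contra h0 => hB; apply/eqP/inDelta0.
  by rewrite /inDelta -AB0 subsetI; apply/andP; split.
- apply/mapP => -[[[[w1 w2] w3] b]]; rewrite mem_enum /= => /and4P[_ h0 _ _] /esym/elt_eq0 E.
  by move: h0; rewrite E eqxx.
- move=> a x a0 /mapP [[[[w1 w2] w3] b]]; rewrite mem_enum /= => /and4P[h1 h0 h2 h3] ->.
  rewrite elt_scale; apply: map_f; rewrite mem_enum inE /= !inDelta_scale //.
  by rewrite h1 h2 h3 GRing.Theory.scaler_eq0 negb_or a0 h0.
Qed.
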